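(* Let $\{P^{[s,t]}_{ij,k}\}$, with initial point $x^{(0)}\in S$, be a discrete time quadratic stochastic process of type (A) or of type (B). Suppose there exist $k_0\in\mathbb{N}$ and a sequence $(\lambda_n)_{n\ge1}$ with $0<\lambda_n<1$, satisfying $\sum_n\lambda_n=\infty$ and $\sum_{j=1}^n\frac{\prod_{k=1}^n(1-\lambda_k)}{1-\lambda_j}\to0$ as $n\to\infty$, such that $P^{[n-1,n]}_{ij,k_0}\ge\lambda_n$ for all $i,j\in\mathbb{N}$ and all $n\ge1$. Then the q.s.p. satisfies the ergodic principle, i.e. $\lim_{n\to\infty}|P^{[m,n]}_{ij,k}-P^{[m,n]}_{uv,k}|=0$ for all $i,j,u,v,k,m$.
   Context: $\mathbb{N}=\{1,2,\dots\}$; times are nonnegative integers. $\ell^1$ is the space of real sequences $x=(x_n)_{n\in\mathbb{N}}$ with $\|x\|_1=\sum_n|x_n|<\infty$, and $S=\{x\in\ell^1:x_n\ge0,\ \|x\|_1=1\}$. A discrete time quadratic stochastic process (q.s.p.) consists of an initial point $x^{(0)}\in S$ and numbers $P^{[s,t]}_{ij,k}$ ($i,j,k\in\mathbb{N}$; $s,t$ nonnegative integers with $t-s\ge1$) such that for all $s,t$: (1) $P^{[s,t]}_{ij,k}=P^{[s,t]}_{ji,k}$; (2) $P^{[s,t]}_{ij,k}\ge0$ and $\sum_{k}P^{[s,t]}_{ij,k}=1$; and (3) one of the following holds for all $s<r<t$: type (A): $P^{[s,t]}_{ij,k}=\sum_{m,l}P^{[s,r]}_{ij,m}P^{[r,t]}_{ml,k}x^{(r)}_l$;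 type (B): $P^{[s,t]}_{ij,k}=\sum_{m,l,g,h}P^{[s,r]}_{im,l}P^{[s,r]}_{jg,h}P^{[r,t]}_{lh,k}x^{(s)}_mx^{(s)}_g$. Here for $r\ge1$, $x^{(r)}_k=\sum_{i,j}P^{[0,r]}_{ij,k}x^{(0)}_ix^{(0)}_j$. *)

(* Defs.v *)
From Stdlib Require Import Reals.
From Coquelicot Require Import Coquelicot.
Open Scope R_scope.

(* Indices i,j,k in N = {1,2,...} are encoded by nat via the shift i |-> i-1
   (so index 0 : nat stands for the mathematical index 1). Times are nat. *)

(* P s t i j k  stands for  P^{[s,t]}_{ij,k}; meaningful only when s < t. *)
Definition qsp_coeffs := nat -> nat -> nat -> nat -> nat -> R.

Definition in_simplex (x : nat -> R) : Prop :=
  (forall k, 0 <= x k) /\ is_series x 1.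

(* x^{(r)}: the initial point for r = 0, and
   x^{(r)}_k = sum_{i,j} P^{[0,r]}_{ij,k} x^{(0)}_i x^{(0)}_j for r >= 1.
   (All terms are nonnegative and the double series converges under the
   q.s.p. axioms, so the iterated Series is the double sum.) *)
Definition xr (P : qsp_coeffs) (x0 : nat -> R) (r : nat) (k : nat) : R :=
  match r with
  | O => x0 k
  | S _ => Series (fun i => Series (fun j => P 0%nat r i j k * x0 i * x0 j))
  end.

Definition qsp_basic (P : qsp_coeffs) : Prop :=
  forall s t : nat, (s < t)%nat ->
    (forall i j k, P s t i j k = P s t j i k) /\
    (forall i j k, 0 <= P s t i j k) /\
    (forall i j, is_series (fun k => P s t i j k) 1).

Definition qsp_typeA (P : qsp_coeffs) (x0 : nat -> R) : Prop :=
  forall s r t : nat, (s < r)%nat -> (r < t)%nat ->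
    forall i j k,
      P s t i j k =
      Series (fun m => Series (fun l =>
        P s r i j m * P r t m l k * xr P x0 r l)).

Definition qsp_typeB (P : qsp_coeffs) (x0 : nat -> R) : Prop :=
  forall s r t : nat, (s < r)%nat -> (r < t)%nat ->
    forall i j k,
      P s t i j k =
      Series (fun m => Series (fun l => Series (fun g => Series (fun h =>
        P s r i m l * P s r j g h * P r t l h k * xr P x0 s m * xr P x0 s g)))).

Definition is_qsp_A (P : qsp_coeffs) (x0 : nat -> R) : Prop :=
  in_simplex x0 /\ qsp_basic P /\ qsp_typeA P x0.
Definition is_qsp_B (P : qsp_coeffs) (x0 : nat -> R) : Prop :=
  in_simplex x0 /\ qsp_basic P /\ qsp_typeB P x0.

Fixpoint prod1 (f : nat -> R) (n : nat) : R :=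
  match n with
  | O => 1
  | S n' => prod1 f n' * f n
  end.

Definition ergodic_principle (P : qsp_coeffs) : Prop :=
  forall i j u v k m : nat,
    is_lim_seq (fun n => Rabs (P m n i j k - P m n u v k)) 0.

(* Main.v *)
Require Import Defs.
From Stdlib Require Import Reals.
From Coquelicot Require Import Coquelicot.
From Stdlib Require Import Lra Lia.
Open Scope R_scope.

Lemma series_lim (a : nat -> R) l : is_series a l -> is_lim_seq (sum_n a) l.
Proof. intro H; exact H. Qed.
Lemma lim_series (a : nat -> R) (l : R) : is_lim_seq (sum_n a) l -> is_series a l.
Proof. intro H; exact H. Qed.

Lemma sum_n_nonneg (a : nat -> R) N : (forall n, 0 <= a n) -> 0 <= sum_n a N.
Proof.
  intro H; induction N. rewrite sum_O; auto.
  rewrite sum_Sn. unfold plus; simpl. specialize (H (S N)). lra.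
Qed.

Lemma sum_n_mono (a : nat -> R) N M : (forall n, 0 <= a n) -> (N <= M)%nat -> sum_n a N <= sum_n a M.
Proof.
  intros H HNM; induction HNM. lra.
  rewrite sum_Sn. unfold plus; simpl. specialize (H (S m)). lra.
Qed.

Lemma psum_le (a : nat -> R) N : (forall n, 0 <= a n) -> ex_series a -> sum_n a N <= Series a.
Proof.
  intros H He. apply Series_correct in He. apply series_lim in He.
  assert (Rbar_le (sum_n a N) (Series a)).
  { apply (is_lim_seq_le_loc (fun _ => sum_n a N) (sum_n a)). exists N. intros n Hn.
    apply sum_n_mono; auto. apply is_lim_seq_const. auto. }
  exact H0.
Qed.

Lemma term_le_sum (a : nat -> R) k : (forall n, 0 <= a n) -> a k <= sum_n a k.
Proof.
  intro H. destruct k. rewrite sum_O; lra.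
  rewrite sum_Sn. unfold plus; simpl. pose proof (sum_n_nonneg a k H). lra.
Qed.

Lemma term_le (a : nat -> R) k : (forall n, 0 <= a n) -> ex_series a -> a k <= Series a.
Proof.
  intros H He. eapply Rle_trans. apply term_le_sum; auto. apply psum_le; auto.
Qed.


Lemma bounded_series (a : nat -> R) B : (forall n, 0 <= a n) -> (forall N, sum_n a N <= B) ->
  ex_series a /\ Series a <= B.
Proof.
  intros H HB.
  assert (E : ex_finite_lim_seq (sum_n a)).
  { apply (ex_finite_lim_seq_incr _ B); auto. intro n. rewrite sum_Sn. unfold plus; simpl.
    specialize (H (S n)); lra. }
  destruct E as [l Hl].
  assert (Hs : is_series a l) by (apply lim_series; auto).
  split. exists l; auto.
  rewrite (is_series_unique a l Hs).
  assert (Rbar_le l B). { apply (is_lim_seq_le (sum_n a) (fun _ => B)); auto. apply is_lim_seq_const. }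
  exact H0.
Qed.

Lemma ex_series_cmp (a b : nat -> R) : (forall n, 0 <= a n <= b n) -> ex_series b -> ex_series a.
Proof.
  intros H Hb. apply (ex_series_le a b); auto. intro n. unfold norm; simpl.
  unfold abs; simpl. specialize (H n). rewrite Rabs_right; lra.
Qed.

Lemma fin_swap (g : nat -> nat -> R) N : (forall n, ex_series (fun m => g m n)) ->
  ex_series (fun m => sum_n (g m) N) /\
  Series (fun m => sum_n (g m) N) = sum_n (fun n => Series (fun m => g m n)) N.
Proof.
  intro H. induction N.
  - rewrite sum_O. split.
    + eapply ex_series_ext; [|apply (H 0%nat)]. intro; simpl; rewrite sum_O; auto.
    + apply Series_ext. intro; rewrite sum_O; auto.
  - destruct IHN as [E1 E2]. rewrite sum_Sn.
    assert (Ex : forall m, sum_n (g m) (S N) = sum_n (g m) N + g m (S N)).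
    { intro m. rewrite sum_Sn. reflexivity. }
    split.
    + eapply ex_series_ext. intro m; symmetry; apply Ex.
      apply (ex_series_plus _ _ E1 (H (S N))).
    + rewrite (Series_ext _ _ Ex). rewrite Series_plus; auto. rewrite E2. reflexivity.
Qed.

Lemma tonelli (f : nat -> nat -> R) : (forall m h, 0 <= f m h) ->
  (forall m, ex_series (f m)) -> ex_series (fun m => Series (f m)) ->
  (forall h, ex_series (fun m => f m h)) /\
  ex_series (fun h => Series (fun m => f m h)) /\
  Series (fun h => Series (fun m => f m h)) = Series (fun m => Series (f m)).
Proof.
  intros H0 H1 H2.
  assert (A : forall h, ex_series (fun m => f m h)).
  { intro h. apply (ex_series_cmp _ (fun m => Series (f m))); auto.
    intro m; split; auto. apply term_le; auto. }
  assert (B : ex_series (fun h => Series (fun m => f m h)) /\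
              Series (fun h => Series (fun m => f m h)) <= Series (fun m => Series (f m))).
  { apply bounded_series.
    - intro h. apply Rle_trans with (f 0%nat h). auto. apply (term_le (fun m => f m h)); auto.
    - intro N. destruct (fin_swap f N A) as [E1 E2]. rewrite <- E2.
      apply Series_le; auto. intro m; split. apply sum_n_nonneg; auto. apply psum_le; auto. }
  destruct B as [B1 B2]. split; auto. split; auto.
  assert (C : Series (fun m => Series (f m)) <= Series (fun h => Series (fun m => f m h))).
  { apply bounded_series.
    - intro m. apply Rle_trans with (f m 0%nat). auto. apply term_le; auto.
    - intro N. destruct (fin_swap (fun h m => f m h) N H1) as [E1 E2]. simpl in E2.
      replace (sum_n (fun m => Series (f m)) N) with (sum_n (fun n : nat => Series (fun m : nat => f n m)) N) by reflexivity. rewrite <- E2. apply Series_le; auto. intro h; split. apply sum_n_nonneg; auto.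
      apply (psum_le (fun m => f m h)); auto. }
  lra.
Qed.

Lemma one_side (p G : nat -> R) S c D k0 : (forall a, 0 <= p a) -> is_series p S ->
  c <= p k0 -> (forall a, 0 <= G a <= D) ->
  ex_series (fun a => p a * G a) /\
  c * G k0 <= Series (fun a => p a * G a) <= S * D - c * (D - G k0).
Proof.
  intros Hp HS Hc HG.
  assert (Ep : ex_series p) by (exists S; auto).
  assert (ESp : Series p = S) by (apply is_series_unique; auto).
  assert (E1 : ex_series (fun a => p a * G a)).
  { apply (ex_series_cmp _ (fun a => p a * D)). intro a. specialize (HG a); specialize (Hp a).
    split; nra. apply ex_series_scal_r; auto. }
  assert (E2 : ex_series (fun a => p a * (D - G a))).
  { apply (ex_series_cmp _ (fun a => p a * D)). intro a. specialize (HG a); specialize (Hp a).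
    split; nra. apply ex_series_scal_r; auto. }
  split; auto.
  pose proof (term_le (fun a => p a * G a) k0) as T1.
  pose proof (term_le (fun a => p a * (D - G a)) k0) as T2.
  assert (Hs : Series (fun a => p a * (D - G a)) = S * D - Series (fun a => p a * G a)).
  { rewrite <- ESp, <- Series_scal_r. rewrite <- Series_minus; auto.
    apply Series_ext; intro; ring. apply ex_series_scal_r; auto. }
  pose proof (HG k0).
  split.
  - eapply Rle_trans; [|apply T1]. nra. intro a; specialize (HG a); specialize (Hp a); nra. auto.
  - assert (c * (D - G k0) <= Series (fun a => p a * (D - G a))).
    { eapply Rle_trans; [|apply T2]. nra. intro a; specialize (HG a); specialize (Hp a); nra. auto. }
    lra.
Qed.

Lemma tv (p q F : nat -> R) S c D k0 : (forall a, 0 <= p a) -> (forall a, 0 <= q a) ->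
  is_series p S -> is_series q S -> c <= p k0 -> c <= q k0 ->
  (forall a b, Rabs (F a - F b) <= D) ->
  ex_series (fun a => p a * F a) /\ ex_series (fun a => q a * F a) /\
  Rabs (Series (fun a => p a * F a) - Series (fun a => q a * F a)) <= (S - c) * D.
Proof.
  intros Hp Hq HSp HSq Hcp Hcq HF.
  assert (HD : 0 <= D). { specialize (HF 0%nat 0%nat). pose proof (Rabs_pos (F 0%nat - F 0%nat)). lra. }
  destruct (completeness (fun y => exists a, y = F a)) as [U [HU1 HU2]].
  { exists (F 0%nat + D). intros y [a ->]. specialize (HF a 0%nat).
    apply Rabs_le_between' in HF. lra. }
  { exists (F 0%nat); exists 0%nat; auto. }
  set (G := fun a => F a - (U - D)).
  assert (HG : forall a, 0 <= G a <= D).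
  { intro a. unfold G. split.
    - assert (U <= F a + D). { apply HU2. intros y [b ->]. specialize (HF b a).
        apply Rabs_le_between' in HF. lra. } lra.
    - assert (F a <= U) by (apply HU1; exists a; auto). lra. }
  destruct (one_side p G S c D k0 Hp HSp Hcp HG) as [Ep1 [Ep2 Ep3]].
  destruct (one_side q G S c D k0 Hq HSq Hcq HG) as [Eq1 [Eq2 Eq3]].
  assert (Ep : ex_series p) by (exists S; auto).
  assert (Eq : ex_series q) by (exists S; auto).
  assert (Fp : forall r, ex_series r -> is_series r S -> ex_series (fun a => r a * G a) ->
     ex_series (fun a => r a * F a) /\ Series (fun a => r a * F a) = Series (fun a => r a * G a) + S * (U - D)).
  { intros r Er Sr ErG.
    assert (Ex : forall a, r a * F a = r a * G a + r a * (U - D)) by (intro a; unfold G; ring).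
    split.
    - eapply ex_series_ext. intro a; symmetry; apply Ex. apply (ex_series_plus _ _ ErG).
      apply ex_series_scal_r; auto.
    - rewrite (Series_ext _ _ Ex). rewrite Series_plus; auto. rewrite Series_scal_r.
      rewrite (is_series_unique r S Sr). auto. apply ex_series_scal_r; auto. }
  destruct (Fp p Ep HSp Ep1) as [A1 A2]. destruct (Fp q Eq HSq Eq1) as [B1 B2].
  split; auto. split; auto. rewrite A2, B2. apply Rabs_le. split; nra.
Qed.

Lemma abs_series_bound (u w : nat -> R) : (forall n, Rabs (u n) <= w n) -> ex_series w ->
  ex_series u /\ Rabs (Series u) <= Series w.
Proof.
  intros H Hw.
  assert (E : ex_series (fun n => Rabs (u n))).
  { apply (ex_series_cmp _ w); auto. intro n; split; auto. apply Rabs_pos. }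
  split. apply ex_series_Rabs; auto.
  eapply Rle_trans. apply Series_Rabs; auto. apply Series_le; auto. intro n; split; auto. apply Rabs_pos.
Qed.

Lemma prod3 a b c : 0 <= a -> 0 <= b -> 0 <= c <= 1 -> 0 <= a * b * c <= a * b.
Proof. intros. assert (0 <= a * b) by (apply Rmult_le_pos; auto). split; nra. Qed.

Section Dec.
Variable Psr : nat -> nat -> nat -> R.
Variable x : nat -> R.
Hypothesis Hp0 : forall i j l, 0 <= Psr i j l.
Hypothesis Hp1 : forall i j, is_series (Psr i j) 1.
Hypothesis Hx0 : forall g, 0 <= x g.
Hypothesis Hx1 : is_series x 1.

Lemma Ex : ex_series x. Proof. exists 1; auto. Qed.
Lemma Ep i j : ex_series (Psr i j). Proof. exists 1; auto. Qed.
Lemma Sp i j : Series (Psr i j) = 1. Proof. apply is_series_unique; auto. Qed.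
Lemma Sx : Series x = 1. Proof. apply is_series_unique; auto. Qed.
Lemma Ple1 i j l : Psr i j l <= 1.
Proof. rewrite <- (Sp i j). apply term_le; auto. apply Ep. Qed.

Definition aa i l := Series (fun g => Psr i g l * x g).

Lemma aa_props i : (forall l, ex_series (fun g => Psr i g l * x g)) /\
  (forall l, 0 <= aa i l) /\ is_series (aa i) 1.
Proof.
  destruct (tonelli (fun g l => Psr i g l * x g)) as [T1 [T2 T3]].
  - intros; apply Rmult_le_pos; auto.
  - intro g. apply ex_series_scal_r. apply Ep.
  - eapply ex_series_ext; [|apply Ex]. intro g. simpl. rewrite Series_scal_r, Sp. ring.
  - split; auto. split.
    + intro l. unfold aa. eapply Rle_trans; [|apply (term_le _ 0%nat)]; auto.
      apply Rmult_le_pos; auto. intro; apply Rmult_le_pos; auto.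
    + unfold aa. replace 1 with (Series (fun h => Series (fun m => Psr i m h * x m))).
      apply Series_correct; auto.
      rewrite T3. rewrite <- Sx. apply Series_ext. intro g. rewrite Series_scal_r, Sp. ring.
Qed.

Lemma aa_lb i c k0 : (forall g, c <= Psr i g k0) -> c <= aa i k0.
Proof.
  intro H. destruct (aa_props i) as [A _].
  destruct (Rle_dec 0 c).
  - replace c with (Series (fun g => c * x g)).
    apply Series_le; auto. intro g; split. apply Rmult_le_pos; auto. apply Rmult_le_compat_r; auto.
    rewrite Series_scal_l, Sx; ring.
  - pose proof (proj1 (proj2 (aa_props i)) k0). lra.
Qed.

Variable Prt : nat -> nat -> R.
Hypothesis Hr0 : forall l h, 0 <= Prt l h <= 1.

Definition GG j l := Series (fun h => aa j h * Prt l h).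

Lemma GG_props j l : ex_series (fun h => aa j h * Prt l h) /\ 0 <= GG j l <= 1.
Proof.
  destruct (aa_props j) as [_ [A1 A2]].
  assert (E : ex_series (fun h => aa j h * Prt l h)).
  { apply (ex_series_cmp _ (aa j)). intro h; specialize (A1 h); specialize (Hr0 l h); split; nra.
    exists 1; auto. }
  split; auto. split.
  - unfold GG. eapply Rle_trans; [|apply (term_le _ 0%nat)]; auto.
    specialize (A1 0%nat); specialize (Hr0 l 0%nat); nra. intro h; specialize (A1 h); specialize (Hr0 l h); nra.
  - unfold GG. rewrite <- (is_series_unique _ _ A2). apply Series_le. intro h; specialize (A1 h); specialize (Hr0 l h); split; nra.
    exists 1; auto.
Qed.

Lemma decompB i j :
  Series (fun m => Series (fun l => Series (fun g => Series (fun h =>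
     Psr i m l * Psr j g h * Prt l h * x m * x g)))) =
  Series (fun l => aa i l * GG j l).
Proof.
  assert (S1 : forall l, Series (fun g => Series (fun h => Psr j g h * x g * Prt l h)) = GG j l).
  { intro l.
    destruct (tonelli (fun g h => Psr j g h * x g * Prt l h)) as [T1 [T2 T3]].
    - intros g h. specialize (Hr0 l h). apply Rmult_le_pos; [apply Rmult_le_pos|]; auto; lra.
    - intro g. apply (ex_series_cmp _ (fun h => Psr j g h * x g)).
      intro h. apply prod3; auto.
      apply ex_series_scal_r, Ep.
    - apply (ex_series_cmp _ x); [|apply Ex]. intro g. split.
      + eapply Rle_trans; [|apply (term_le _ 0%nat)].
        apply prod3; auto.
        intro h; apply prod3; auto.
        apply (ex_series_cmp _ (fun h => Psr j g h * x g)).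
        intro h. apply prod3; auto.
        apply ex_series_scal_r, Ep.
      + apply Rle_trans with (Series (fun h => Psr j g h * x g)).
        apply Series_le. intro h. apply prod3; auto.
        apply ex_series_scal_r, Ep. right. rewrite Series_scal_r, Sp; ring.
    - rewrite <- T3. unfold GG. apply Series_ext. intro h. unfold aa. rewrite <- Series_scal_r.
      apply Series_ext. intro g. ring. }
  assert (S2 : forall m l, Series (fun g => Series (fun h =>
     Psr i m l * Psr j g h * Prt l h * x m * x g)) = Psr i m l * x m * GG j l).
  { intros m l. rewrite <- S1. rewrite <- Series_scal_l. apply Series_ext. intro g.
    rewrite <- Series_scal_l. apply Series_ext. intro h. ring. }
  rewrite (Series_ext _ (fun m => Series (fun l => Psr i m l * x m * GG j l))).
  2:{ intro m. apply Series_ext. intro l. apply S2. }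
  destruct (tonelli (fun m l => Psr i m l * x m * GG j l)) as [T1 [T2 T3]].
  - intros m l. destruct (GG_props j l). apply Rmult_le_pos; [apply Rmult_le_pos|]; auto; lra.
  - intro m. apply (ex_series_cmp _ (fun l => Psr i m l * x m)).
    intro l. apply prod3; auto. apply GG_props.
    apply ex_series_scal_r, Ep.
  - apply (ex_series_cmp _ x); [|apply Ex]. intro m.
    assert (E : ex_series (fun l => Psr i m l * x m * GG j l)).
    { apply (ex_series_cmp _ (fun l => Psr i m l * x m)).
      intro l. apply prod3; auto. apply GG_props.
      apply ex_series_scal_r, Ep. }
    split.
    + eapply Rle_trans; [|apply (term_le _ 0%nat)]; auto.
      apply prod3; auto. apply GG_props.
      intro l. apply prod3; auto. apply GG_props.
    + apply Rle_trans with (Series (fun l => Psr i m l * x m)).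
      apply Series_le. intro l. apply prod3; auto. apply GG_props.
      apply ex_series_scal_r, Ep. right. rewrite Series_scal_r, Sp; ring.
  - rewrite <- T3. apply Series_ext. intro l. unfold aa. rewrite <- Series_scal_r.
    apply Series_ext. intro m. ring.
Qed.

End Dec.

Lemma basic_facts P s t : qsp_basic P -> (s < t)%nat ->
  forall i j, (forall k, 0 <= P s t i j k <= 1) /\ ex_series (P s t i j) /\ Series (P s t i j) = 1.
Proof.
  intros HB Hst i j. destruct (HB s t Hst) as [_ [H0 H1]].
  assert (E : ex_series (P s t i j)) by (exists 1; auto).
  assert (S1 : Series (P s t i j) = 1) by (apply is_series_unique; auto).
  split; auto. intro k. split; auto. rewrite <- S1. apply term_le; auto.
Qed.

Lemma xr_simplex P x0 : in_simplex x0 -> qsp_basic P ->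
  forall r, (forall k, 0 <= Defs.xr P x0 r k) /\ is_series (Defs.xr P x0 r) 1.
Proof.
  intros [Hx0 Hx1] HB r. destruct r as [|r]. simpl; auto.
  assert (Hlt : (0 < S r)%nat) by lia.
  pose proof (basic_facts P 0 (S r) HB Hlt) as BF.
  assert (Ex : ex_series x0) by (exists 1; auto).
  assert (Sx : Series x0 = 1) by (apply is_series_unique; auto).
  assert (Inner : forall i,
    (forall k, ex_series (fun j => P 0%nat (S r) i j k * x0 i * x0 j)) /\
    ex_series (fun k => Series (fun j => P 0%nat (S r) i j k * x0 i * x0 j)) /\
    Series (fun k => Series (fun j => P 0%nat (S r) i j k * x0 i * x0 j)) = x0 i).
  { intro i.
    destruct (tonelli (fun j k => P 0%nat (S r) i j k * x0 i * x0 j)) as [T1 [T2 T3]].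
    - intros j k. destruct (BF i j) as [B _]. specialize (B k).
      apply Rmult_le_pos; [apply Rmult_le_pos|]; auto; lra.
    - intro j. apply ex_series_scal_r. apply ex_series_scal_r. apply BF.
    - eapply ex_series_ext; [|apply (ex_series_scal_l (x0 i) x0 Ex)].
      intro j. simpl. rewrite Series_scal_r, Series_scal_r. destruct (BF i j) as [_ [_ ->]].
      unfold scal; simpl; unfold mult; simpl. ring.
    - split; auto. split; auto. rewrite T3.
      rewrite (Series_ext _ (fun j => x0 i * x0 j)). rewrite Series_scal_l, Sx. ring.
      intro j. rewrite Series_scal_r, Series_scal_r. destruct (BF i j) as [_ [_ ->]]. ring. }
  destruct (tonelli (fun i k => Series (fun j => P 0%nat (S r) i j k * x0 i * x0 j))) as [T1 [T2 T3]].
  - intros i k. destruct (Inner i) as [I1 _].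
    eapply Rle_trans; [|apply (term_le _ 0%nat)]; auto.
    destruct (BF i 0%nat) as [B _]. specialize (B k). apply Rmult_le_pos; [apply Rmult_le_pos|]; auto; lra.
    intro j. destruct (BF i j) as [B _]. specialize (B k). apply Rmult_le_pos; [apply Rmult_le_pos|]; auto; lra.
  - intro i. apply Inner.
  - eapply ex_series_ext; [|apply Ex]. intro i. symmetry. apply Inner.
  - split.
    + intro k. simpl. eapply Rle_trans; [|apply (term_le _ 0%nat)]; auto.
      * destruct (Inner 0%nat) as [I1 _].
        eapply Rle_trans; [|apply (term_le _ 0%nat)]; auto.
        destruct (BF 0%nat 0%nat) as [B _]. specialize (B k). apply Rmult_le_pos; [apply Rmult_le_pos|]; auto; lra.
        intro j. destruct (BF 0%nat j) as [B _]. specialize (B k). apply Rmult_le_pos; [apply Rmult_le_pos|]; auto; lra.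
      * intro i. destruct (Inner i) as [I1 _].
        eapply Rle_trans; [|apply (term_le _ 0%nat)]; auto.
        destruct (BF i 0%nat) as [B _]. specialize (B k). apply Rmult_le_pos; [apply Rmult_le_pos|]; auto; lra.
        intro j. destruct (BF i j) as [B _]. specialize (B k). apply Rmult_le_pos; [apply Rmult_le_pos|]; auto; lra.
    + replace 1 with (Series (fun k => Defs.xr P x0 (S r) k)).
      apply Series_correct. exact T2.
      simpl. rewrite T3. rewrite <- Sx. apply Series_ext. intro i. apply Inner.
Qed.

Fixpoint pr (lam : nat -> R) (m d : nat) : R :=
  match d with O => 1 | S d' => (1 - lam (S m)) * pr lam (S m) d' end.

Lemma claimA P x0 k0 lam k : in_simplex x0 -> qsp_basic P -> qsp_typeA P x0 ->
  (forall n : nat, (1 <= n)%nat -> 0 < lam n < 1) ->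
  (forall n : nat, (1 <= n)%nat -> forall i j : nat, P (n - 1)%nat n i j k0 >= lam n) ->
  forall d m i j u v, Rabs (P m (S m + d)%nat i j k - P m (S m + d)%nat u v k) <= pr lam m d.
Proof.
  intros Hx HB HA Hlam Hlb d. induction d as [|d IH]; intros m i j u v.
  - change (pr lam m 0) with 1. assert (Hl : (m < S m + 0)%nat) by lia.
    destruct (basic_facts P _ _ HB Hl i j) as [B1 _]. destruct (basic_facts P _ _ HB Hl u v) as [B2 _].
    specialize (B1 k); specialize (B2 k). apply Rabs_le; lra.
  - set (n := (S m + S d)%nat).
    assert (IH' : forall i j u v, Rabs (P (S m) n i j k - P (S m) n u v k) <= pr lam (S m) d).
    { intros. replace n with (S (S m) + d)%nat by (unfold n; lia). apply IH. }
    clear IH.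
    assert (H1 : (m < S m)%nat) by lia. assert (H2 : (S m < n)%nat) by (unfold n; lia).
    destruct (xr_simplex P x0 Hx HB (S m)) as [X0 X1].
    set (x := Defs.xr P x0 (S m)) in *.
    assert (Ex : ex_series x) by (exists 1; auto).
    assert (Sx : Series x = 1) by (apply is_series_unique; auto).
    set (R_ := fun a => Series (fun l => P (S m) n a l k * x l)).
    assert (Dec : forall i j, P m n i j k = Series (fun a => P m (S m) i j a * R_ a)).
    { intros i0 j0. rewrite (HA m (S m) n H1 H2). apply Series_ext. intro a.
      unfold R_. rewrite <- Series_scal_l. apply Series_ext. intro l. unfold x. ring. }
    set (D := pr lam (S m) d).
    assert (BR : forall a b, Rabs (R_ a - R_ b) <= D).
    { intros a b. unfold R_.
      assert (Ea : forall a, ex_series (fun l => P (S m) n a l k * x l)).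
      { intro a0. apply (ex_series_cmp _ x); auto. intro l.
        destruct (basic_facts P _ _ HB H2 a0 l) as [B _]. specialize (B k). specialize (X0 l). split; nra. }
      rewrite <- Series_minus; auto.
      destruct (abs_series_bound (fun l => P (S m) n a l k * x l - P (S m) n b l k * x l)
                  (fun l => D * x l)) as [_ Hb].
      - intro l. replace (P (S m) n a l k * x l - P (S m) n b l k * x l) with
          ((P (S m) n a l k - P (S m) n b l k) * x l) by ring.
        rewrite Rabs_mult, (Rabs_right (x l)) by (apply Rle_ge, X0).
        apply Rmult_le_compat_r. apply X0. apply IH'.
      - apply ex_series_scal_l with (c := D) in Ex. exact Ex.
      - rewrite Series_scal_l, Sx, Rmult_1_r in Hb. exact Hb. }
    assert (Hc : forall i j, lam (S m) <= P m (S m) i j k0).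
    { intros. specialize (Hlb (S m) ltac:(lia) i0 j0). replace (S m - 1)%nat with m in Hlb by lia. lra. }
    destruct (tv (P m (S m) i j) (P m (S m) u v) R_ 1 (lam (S m)) D k0) as [_ [_ T]].
    + apply (basic_facts P _ _ HB H1).
    + apply (basic_facts P _ _ HB H1).
    + apply (HB _ _ H1).
    + apply (HB _ _ H1).
    + apply Hc. + apply Hc. + exact BR.
    + rewrite !Dec. simpl. exact T.
Qed.

Lemma claimB P x0 k0 lam k : in_simplex x0 -> qsp_basic P -> qsp_typeB P x0 ->
  (forall n : nat, (1 <= n)%nat -> 0 < lam n < 1) ->
  (forall n : nat, (1 <= n)%nat -> forall i j : nat, P (n - 1)%nat n i j k0 >= lam n) ->
  forall d m i j v, Rabs (P m (S m + d)%nat i j k - P m (S m + d)%nat i v k) <= pr lam m d.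
Proof.
  intros Hx HB HTB Hlam Hlb d. induction d as [|d IH]; intros m i j v.
  - change (pr lam m 0) with 1. assert (Hl : (m < S m + 0)%nat) by lia.
    destruct (basic_facts P _ _ HB Hl i j) as [B1 _]. destruct (basic_facts P _ _ HB Hl i v) as [B2 _].
    specialize (B1 k); specialize (B2 k). apply Rabs_le; lra.
  - set (n := (S m + S d)%nat).
    assert (IH' : forall i j v, Rabs (P (S m) n i j k - P (S m) n i v k) <= pr lam (S m) d).
    { intros. replace n with (S (S m) + d)%nat by (unfold n; lia). apply IH. }
    clear IH.
    assert (H1 : (m < S m)%nat) by lia. assert (H2 : (S m < n)%nat) by (unfold n; lia).
    destruct (xr_simplex P x0 Hx HB m) as [Hx0 Hx1].
    set (x := Defs.xr P x0 m) in *.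
    set (Psr := P m (S m)).
    set (Prt := fun l h => P (S m) n l h k).
    assert (Hp0 : forall i j l, 0 <= Psr i j l) by (intros; apply (basic_facts P _ _ HB H1)).
    assert (Hp1 : forall i j, is_series (Psr i j) 1) by (intros; apply (HB _ _ H1)).
    assert (Hr0 : forall l h, 0 <= Prt l h <= 1) by (intros; apply (basic_facts P _ _ HB H2)).
    assert (Dec : forall i j, P m n i j k = Series (fun l => aa Psr x i l * GG Psr x Prt j l)).
    { intros i0 j0. rewrite (HTB m (S m) n H1 H2). apply decompB; auto. }
    set (D := pr lam (S m) d).
    set (c := lam (S m)).
    assert (Hc : forall j, c <= aa Psr x j k0).
    { intro j0. apply aa_lb; auto. intro g. specialize (Hlb (S m) ltac:(lia) j0 g).
      replace (S m - 1)%nat with m in Hlb by lia. unfold Psr, c. lra. }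
    assert (BG : forall l, Rabs (GG Psr x Prt j l - GG Psr x Prt v l) <= (1 - c) * D).
    { intro l. destruct (aa_props Psr x Hp0 Hp1 Hx0 Hx1 j) as [_ [A1 A2]].
      destruct (aa_props Psr x Hp0 Hp1 Hx0 Hx1 v) as [_ [B1 B2]].
      destruct (tv (aa Psr x j) (aa Psr x v) (Prt l) 1 c D k0) as [_ [_ T]]; auto.
      intros a b. apply IH'. }
    destruct (aa_props Psr x Hp0 Hp1 Hx0 Hx1 i) as [_ [A1 A2]].
    assert (Ea : ex_series (aa Psr x i)) by (exists 1; auto).
    rewrite !Dec. rewrite <- Series_minus.
    2,3: apply (ex_series_cmp _ (aa Psr x i)); auto; intro l; split;
      [apply Rmult_le_pos; [apply A1 | apply GG_props; auto]
      | rewrite <- (Rmult_1_r (aa Psr x i l)) at 2; apply Rmult_le_compat_l; [apply A1| apply GG_props; auto]].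
    destruct (abs_series_bound (fun l => aa Psr x i l * GG Psr x Prt j l - aa Psr x i l * GG Psr x Prt v l)
                  (fun l => aa Psr x i l * ((1 - c) * D))) as [_ Hb].
    + intro l. replace (aa Psr x i l * GG Psr x Prt j l - aa Psr x i l * GG Psr x Prt v l) with
          (aa Psr x i l * (GG Psr x Prt j l - GG Psr x Prt v l)) by ring.
      rewrite Rabs_mult, (Rabs_right (aa Psr x i l)) by (apply Rle_ge, A1).
      apply Rmult_le_compat_l. apply A1. apply BG.
    + apply ex_series_scal_r; auto.
    + rewrite Series_scal_r, (is_series_unique _ _ A2), Rmult_1_l in Hb. simpl. exact Hb.
Qed.

Fixpoint sr (lam : nat -> R) (m d : nat) : R :=
  match d with O => 0 | S d' => lam (S m) + sr lam (S m) d' end.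

Section Lim.
Variable lam : nat -> R.
Hypothesis Hlam : forall n : nat, (1 <= n)%nat -> 0 < lam n < 1.

Lemma pr_bounds d : forall m, 0 <= pr lam m d <= 1 /\ 0 <= sr lam m d /\ pr lam m d * (1 + sr lam m d) <= 1.
Proof.
  induction d as [|d IH]; intro m; simpl. { lra. }
  destruct (IH (S m)) as [[A1 A2] [B C]]. assert (L : 0 < lam (S m) < 1) by (apply Hlam; lia).
  split; [split|split]; try nra.
Qed.

Lemma sr_eq d : forall m, sr lam m d = sum_n_m lam 1 (m + d) - sum_n_m lam 1 m.
Proof.
  induction d as [|d IH]; intro m; simpl.
  - rewrite Nat.add_0_r. ring.
  - rewrite IH. replace (m + S d)%nat with (S m + d)%nat by lia.
    rewrite (sum_n_Sm lam 1 m) by lia. unfold plus; simpl. ring.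
Qed.

Lemma lim_pr m : is_lim_seq (fun n => sum_n_m lam 1 n) p_infty ->
  is_lim_seq (fun d => 2 * pr lam m d) 0.
Proof.
  intro Hs.
  assert (L1 : is_lim_seq (fun d => 1 + sr lam m d) p_infty).
  { apply (is_lim_seq_ext (fun d => sum_n_m lam 1 (d + m) + (1 - sum_n_m lam 1 m))).
    intro d. rewrite sr_eq. replace (m + d)%nat with (d + m)%nat by lia. ring.
    eapply is_lim_seq_plus. apply (is_lim_seq_incr_n _ m) in Hs. exact Hs.
    apply is_lim_seq_const. simpl. reflexivity. }
  assert (L2 : is_lim_seq (fun d => 2 * / (1 + sr lam m d)) 0).
  { replace (Finite 0) with (Rbar_mult 2 (Rbar_inv p_infty)).
    apply is_lim_seq_scal_l. apply is_lim_seq_inv. auto. discriminate.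
    simpl. f_equal. ring. }
  apply (is_lim_seq_le_le (fun _ => 0) _ (fun d => 2 * / (1 + sr lam m d))); auto.
  2: apply is_lim_seq_const.
  intro d. destruct (pr_bounds d m) as [[A1 A2] [B C]]. split. lra.
  apply Rmult_le_compat_l. lra.
  apply (Rmult_le_reg_r (1 + sr lam m d)). lra. rewrite Rinv_l by lra. exact C.
Qed.
End Lim.

Theorem theorem3p4 (P : qsp_coeffs) (x0 : nat -> R) (k0 : nat) (lam : nat -> R) :
  (is_qsp_A P x0 \/ is_qsp_B P x0) ->
  (forall n : nat, (1 <= n)%nat -> 0 < lam n < 1) ->
  is_lim_seq (fun n => sum_n_m lam 1 n) p_infty ->
  is_lim_seq (fun n => sum_n_m (fun j => prod1 (fun k => 1 - lam k) n / (1 - lam j)) 1 n) 0 ->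
  (forall n : nat, (1 <= n)%nat -> forall i j : nat, P (n - 1)%nat n i j k0 >= lam n) ->
  ergodic_principle P.
Proof.
  intros Hq Hlam Hs _ Hlb. unfold ergodic_principle. intros i j u v k m.
  assert (Bd : forall d, Rabs (P m (S m + d)%nat i j k - P m (S m + d)%nat u v k) <= 2 * pr lam m d).
  { intro d. destruct (pr_bounds lam Hlam d m) as [[A1 A2] _].
    destruct Hq as [[Hx [HB HA]] | [Hx [HB HTB]]].
    - pose proof (claimA P x0 k0 lam k Hx HB HA Hlam Hlb d m i j u v). lra.
    - assert (Hl : (m < S m + d)%nat) by lia.
      destruct (HB _ _ Hl) as [Sym _].
      pose proof (claimB P x0 k0 lam k Hx HB HTB Hlam Hlb d m i j v) as C1.
      pose proof (claimB P x0 k0 lam k Hx HB HTB Hlam Hlb d m v i u) as C2.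
      rewrite (Sym v i), (Sym v u) in C2.
      eapply Rle_trans. 
      replace (P m (S m + d)%nat i j k - P m (S m + d)%nat u v k) with
        ((P m (S m + d)%nat i j k - P m (S m + d)%nat i v k) + (P m (S m + d)%nat i v k - P m (S m + d)%nat u v k)) by ring.
      apply Rabs_triang. lra. }
  apply (is_lim_seq_incr_n _ (S m)).
  apply (is_lim_seq_le_le (fun _ => 0) _ (fun d => 2 * pr lam m d)).
  - intro d. split. apply Rabs_pos. replace (d + S m)%nat with (S m + d)%nat by lia. apply Bd.
  - apply is_lim_seq_const.
  - apply lim_pr; auto.
Qed.
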